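(* Let $w\in\mathrm{ACol}(C_n)^*$ be a word of length $t$ (number of letters from $\mathrm{ACol}(C_n)$), and let $s: w=w_0\Rightarrow w_1\Rightarrow\cdots\Rightarrow w_k$ be any finite rewriting sequence in the polygraph $\mathbf{ACol}$, each step being a rewriting step. Then the number of steps of $s$ that apply an $\epsilon$-rule is at most $\frac{t^2(3t+1)}{4}$.
   Context: Setting: $C_n=\{1<\cdots<n<\overline n<\cdots<\overline1\}$; columns, admissible columns, the order $\preceq$ on admissible columns, tableau words, the plactic monoid $Pl(C_n)$ and the column insertion $(c\leftarrow d)$ (the unique tableau word, of at most two admissible columns, equal in $Pl(C_n)$ to $cd$) are as usual for type $C$ (Lecouvey, Kashiwara–Nakashima): $c=x_1\cdots x_k\preceq d=y_1\cdots y_l$ iff $k\ge l$, $x_i\le y_i$ for $i\le l$, and no $(a,b)$-configuration occurs; a tableau word is $c_1\cdots c_k$ with $c_{i+1}\preceq c_i$, and each element of $Pl(C_n)$ has a unique tableau word representative. Let $\mathrm{ACol}(C_n)$ be the set of admissible columns together with an extra symbol $\epsilon$ (the ''empty column''). Let $p:\mathrm{ACol}(C_n)^*\to C_n^*$ be the monoid morphism sending $\epsilon$ to the empty word and each admissible column to itself. Extend $\preceq$ by declaring $c\preceq\epsilon$ for every $c\in\mathrm{ACol}(C_n)$, and $\epsilon\not\preceq c$ for $c\ne\epsilon$. For $c_1,c_2\in\mathrm{ACol}(C_n)$ define $(c_1\leftarrow c_2)\in\mathrm{ACol}(C_n)^2$ to be $d_1d_2$ if the tableau word of $p(c_1)p(c_2)$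 is the two-column word $d_1d_2$, $\epsilon d$ if it is a single column $d$, and $\epsilon\epsilon$ if it is empty. The 2-polygraph $\mathbf{ACol}$ has generators $\mathrm{ACol}(C_n)$ and rewriting rules $c_1c_2\Rightarrow(c_1\leftarrow c_2)$ for all $c_1,c_2$ with $c_2\not\preceq c_1$; a rewriting step is $xc_1c_2y\Rightarrow x(c_1\leftarrow c_2)y$. The $\epsilon$-rules are the rules whose source contains $\epsilon$; these are exactly $c\epsilon\Rightarrow\epsilon c$ for $c\ne\epsilon$. *)

(* Defs.v *)
From mathcomp Require Import all_boot.
From Stdlib Require Import Relation_Operators.
Set Implicit Arguments. Unset Strict Implicit. Unset Printing Implicit Defensive.

(* The alphabet C_n = {1 < ... < n < nbar < ... < 1bar} is encoded by the    *)
(* natural numbers 1..2n with their usual order: the unbarred letter i is i, *)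
(* the barred letter ibar is 2n+1-i.                                         *)

Definition letter (n x : nat) : bool := (1 <= x) && (x <= n.*2).
Definition bar (n x : nat) : nat := n.*2.+1 - x.
Definition unbarred (n x : nat) : bool := (1 <= x) && (x <= n).

Definition is_column (n : nat) (c : seq nat) : bool :=
  [&& c != [::], all (letter n) c & sorted ltn c].

Definition Ncount (n : nat) (c : seq nat) (m : nat) : nat :=
  count (fun x => (x <= m) || (bar n m <= x)) c.

Definition admissible (n : nat) (c : seq nat) : bool :=
  is_column n c && all (fun m => Ncount n c m <= m) (iota 1 n).

Definition pair_letters (n : nat) (c : seq nat) : seq nat :=
  rev [seq z <- iota 1 n | (z \in c) && (bar n z \in c)].

(* greatest unbarred letter t < m with t \notin c and tbar \notin c (0 if none) *)
Definition greatest_free (n : nat) (c : seq nat) (m : nat) : nat :=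
  last 0 [seq t <- iota 1 (m.-1) | (t \notin c) && (bar n t \notin c)].

Fixpoint split_ts (n : nat) (c : seq nat) (zs : seq nat) (bound : nat) : seq nat :=
  match zs with
  | [::] => [::]
  | z :: zs' => let t := greatest_free n c (minn bound z) in
                t :: split_ts n c zs' t
  end.

Definition ts_of (n : nat) (c : seq nat) : seq nat :=
  split_ts n c (pair_letters n c) n.+1.

(* lC: replace each z_i by t_i; rC: replace each z_i bar by t_i bar. *)
Definition lcol (n : nat) (c : seq nat) : seq nat :=
  sort leq ([seq x <- c | x \notin pair_letters n c] ++ ts_of n c).
Definition rcol (n : nat) (c : seq nat) : seq nat :=
  sort leq ([seq x <- c | x \notin map (bar n) (pair_letters n c)]
              ++ map (bar n) (ts_of n c)).

(* c = x_1..x_k  ⪯  d = y_1..y_l : k >= l, x_i <= y_i, and no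
   (a,b)-configuration, the latter expressed through Lecouvey's split
   columns: (rc)_i <= (ld)_i for i <= l. *)
Definition col_le (n : nat) (c d : seq nat) : bool :=
  [&& size d <= size c,
      all (fun i => nth 0 c i <= nth 0 d i) (iota 0 (size d)) &
      all (fun i => nth 0 (rcol n c) i <= nth 0 (lcol n d) i) (iota 0 (size d))].

Inductive plactic_rel (n : nat) : seq nat -> seq nat -> Prop :=
| R1a x y z : letter n x -> letter n y -> letter n z ->
    x <= y -> y < z -> z != bar n x -> plactic_rel n [:: y; z; x] [:: y; x; z]
| R1b x y z : letter n x -> letter n y -> letter n z ->
    x < y -> y <= z -> z != bar n x -> plactic_rel n [:: x; z; y] [:: z; x; y]
| R2a x y : 1 < x -> x <= n -> x <= y -> y <= bar n x ->
    plactic_rel n [:: y; bar n x.-1; x.-1] [:: y; x; bar n x]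
| R2b x y : 1 < x -> x <= n -> x <= y -> y <= bar n x ->
    plactic_rel n [:: x; bar n x; y] [:: bar n x.-1; x.-1; y]
| R3 w z :
    is_column n w -> ~~ admissible n w ->
    (forall i j, i < j -> j <= size w -> j - i < size w ->
       admissible n (take (j - i) (drop i w))) ->
    unbarred n z -> z \in w -> bar n z \in w -> Ncount n w z = z.+1 ->
    (forall z', z' < z -> unbarred n z' -> z' \in w -> bar n z' \in w ->
       Ncount n w z' != z'.+1) ->
    plactic_rel n w [seq x <- w | (x != z) && (x != bar n z)].

Definition pl_step (n : nat) (u v : seq nat) : Prop :=
  exists x y l r, plactic_rel n l r /\ u = x ++ l ++ y /\ v = x ++ r ++ y.

Definition pl_eq (n : nat) : seq nat -> seq nat -> Prop :=
  clos_refl_sym_trans (seq nat) (pl_step n).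

Definition tableau_word (n : nat) (cs : seq (seq nat)) : bool :=
  all (admissible n) cs && sorted (fun a b => col_le n b a) cs.

(* generators: None = epsilon (empty column), Some c = admissible column c *)
Definition acol := option (seq nat).

Definition acol_valid (n : nat) (o : acol) : bool :=
  if o is Some c then admissible n c else true.

Definition p_acol (o : acol) : seq nat := if o is Some c then c else [::].
Definition p_word (w : seq acol) : seq nat := flatten (map p_acol w).

Definition acol_le (n : nat) (o1 o2 : acol) : bool :=
  match o1, o2 with
  | _, None => true
  | None, Some _ => false
  | Some c, Some d => col_le n c d
  end.

Definition encode2 (cs : seq (seq nat)) : seq acol :=
  match cs with
  | [::] => [:: None; None]
  | [:: d] => [:: None; Some d]
  | _ => map Some cs
  end.

Definition insertion (n : nat) (c1 c2 o1 o2 : acol) : Prop :=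
  exists cs, tableau_word n cs /\ pl_eq n (flatten cs) (p_acol c1 ++ p_acol c2)
             /\ encode2 cs = [:: o1; o2].

(* uniqueness of tableau word representatives in Pl(C_n) (standing fact) *)
Definition tableau_unique (n : nat) : Prop :=
  forall cs1 cs2, tableau_word n cs1 -> tableau_word n cs2 ->
    pl_eq n (flatten cs1) (flatten cs2) -> cs1 = cs2.

(* a rewriting step x c1 c2 y => x (c1<-c2) y, with flag eps = whether the
   applied rule is an epsilon-rule (its source contains epsilon) *)
Definition rw_step (n : nat) (u v : seq acol) (eps : bool) : Prop :=
  exists x y c1 c2 o1 o2,
    [/\ u = x ++ [:: c1; c2] ++ y, v = x ++ [:: o1; o2] ++ y,
        acol_valid n c1 && acol_valid n c2,
        ~~ acol_le n c2 c1 & insertion n c1 c2 o1 o2]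
    /\ eps = (c1 == None) || (c2 == None).

(* a finite rewriting sequence w = w_0 => w_1 => ... => w_k, given as the
   list of steps (eps-flag_i, w_i), i = 1..k *)
Fixpoint rw_seq (n : nat) (w : seq acol) (s : seq (bool * seq acol)) : Prop :=
  match s with
  | [::] => True
  | (b, v) :: s' => rw_step n w v b /\ rw_seq n v s'
  end.

Definition eps_steps (s : seq (bool * seq acol)) : nat := count fst s.

(* Main.v *)
Require Import Defs.
From mathcomp Require Import all_boot.
From mathcomp Require Import zify.
From Stdlib Require Import Relation_Operators.
Set Implicit Arguments. Unset Strict Implicit. Unset Printing Implicit Defensive.

Definition isS (o : acol) : bool := if o is Some _ then true else false.
Definition nS (w : seq acol) : nat := count isS w.
Definition nN (w : seq acol) : nat := count (fun o => ~~ isS o) w.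

Fixpoint phi (w : seq acol) : nat :=
  match w with
  | [::] => 0
  | a :: w' => (if isS a then nN w' else 0) + phi w'
  end.

Definition psi (t : nat) (w : seq acol) : nat := phi w + t * nS w.

Lemma phi_cat x y : phi (x ++ y) = phi x + phi y + nS x * nN y.
Proof.
elim: x => [|a x IH] /=; first lia.
rewrite IH /nS /nN /= count_cat.
case: (isS a) => /=; lia.
Qed.

Lemma phi_le w : phi w <= nS w * nN w.
Proof.
elim: w => [|a w IH] /=; first by [].
rewrite /nS /nN /=. case: (isS a) => /=; rewrite -/(nS w) -/(nN w); nia.
Qed.

Lemma size_nSN w : size w = nS w + nN w.
Proof.
rewrite /nS /nN. elim: w => [|a w IH] //=. case: (isS a) => /=; lia.
Qed.

Lemma step_dec n (huniq : tableau_unique n) u v b :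
  rw_step n u v b -> size v = size u /\ psi (size u) v + b <= psi (size u) u.
Proof.
case=> x [y [c1 [c2 [o1 [o2 [[-> -> Hval Hle Hins] ->]]]]]].
have Ha : nS x <= size x by rewrite (size_nSN x); lia.
split; first by rewrite !size_cat.
rewrite !size_cat /=.
rewrite /psi !phi_cat /nS !count_cat -/(nS x) -/(nS y).
rewrite /nN ?count_cat -?/(nN y).
case: Hins => cs [Htw [Hpl Henc]].
case: c1 Hval Hle Hpl => [c|]; last by case: c2.
case: c2 => [d|] Hval Hle Hpl.
-
  case: cs Htw Hpl Henc => [|d1 [|d2 [|d3 r]]] Htw Hpl //= [<- <-] /=; nia.
-
  have Hc : cs = [:: c].
    apply: huniq => //.
    rewrite /tableau_word /= andbT. by move: Hval => /= ->.
  move: Henc; rewrite Hc /= => -[<- <-] /=; nia.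
Qed.

Lemma seq_bound n (huniq : tableau_unique n) s : forall w,
  rw_seq n w s -> eps_steps s <= psi (size w) w.
Proof.
elim: s => [|[b v] s IH] w //=.
case=> Hst Hs.
have [Hsz Hd] := step_dec huniq Hst.
have := IH v Hs. rewrite Hsz /eps_steps /=. clear Hst Hs. move: Hd. case: b => /=; lia.
Qed.

Theorem proposition3p1 (n : nat) (n_gt0 : 0 < n) (huniq : tableau_unique n)
  (w : seq acol) (s : seq (bool * seq acol)) :
  all (acol_valid n) w -> rw_seq n w s ->
  4 * eps_steps s <= (size w) ^ 2 * (3 * size w + 1).
Proof.
move=> _ Hs.
have H1 := seq_bound huniq Hs.
have H2 := phi_le w.
have H3 := size_nSN w.
move: H1; rewrite /psi H3.
case: (nS w) H2 => [|a] H2; case: (nN w) H2 => [|b] H2; nia.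
Qed.
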